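(* Let $k\ge 0$ and let $\mathcal{M}$ be a uniform oriented matroid of rank $r\ge 2$ on $n=r+k$ elements (i.e. of corank $k$). Then $$\operatorname{diam}(G^*(\mathcal{M}))\le \max\{\operatorname{diam}(G^*(\mathcal{M}')) : \mathcal{M}' \text{ a uniform oriented matroid of rank } r' \text{ on } r'+k \text{ elements},\ 2\le r'\le k+2\}.$$
   Context: Sign vectors: for a finite set $E$ and $X\in\{+,-,0\}^E$, write $X^+=\{e:X_e=+\}$, $X^-=\{e:X_e=-\}$, $X^0=\{e:X_e=0\}$, $\operatorname{supp}(X)=X^+\cup X^-$, and $-X$ for the componentwise negation. For sign vectors $X,Y$, the separating set is $S(X,Y)=(X^+\cap Y^-)\cup(X^-\cap Y^+)$, and the composition $X\circ Y$ is given by $(X\circ Y)_e=X_e$ if $X_e\neq 0$ and $(X\circ Y)_e=Y_e$ otherwise. An oriented matroid $\mathcal{M}=(E,\mathcal{C}^* )$ is a finite set $E$ together with a set $\mathcal{C}^*\subseteq\{+,-,0\}^E$ of (signed) cocircuits satisfying: (CC0) $\mathbf{0}\notin\mathcal{C}^*$; (CC1) $X\in\mathcal{C}^*\Rightarrow -X\in\mathcal{C}^*$; (CC2) if $X,Y\in\mathcal{C}^*$ and $\operatorname{supp}(X)\subseteq\operatorname{supp}(Y)$ then $X=\pm Y$; (CC3) if $X,Y\in\mathcal{C}^*$, $X\neq -Y$ and $e\in S(X,Y)$, then there is $Z\in\mathcal{C}^*$ with $Z^+\subseteq (X^+\cup Y^+)\setminus\{e\}$ and $Z^-\subseteq (X^-\cup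 Y^-)\setminus\{e\}$. The covectors of $\mathcal{M}$ are $\mathbf{0}$ together with all compositions $X^1\circ\cdots\circ X^k$ ($k\ge 1$) of cocircuits, partially ordered componentwise by $0<+$ and $0<-$ ($+,-$ incomparable). The rank $r$ of $\mathcal{M}$ is the largest $k$ such that there is a chain $\mathbf{0}=V_0<V_1<\cdots<V_k$ of covectors; the corank is $|E|-r$. $\mathcal{M}$ is uniform if $|X^0|=r-1$ for every cocircuit $X$. The cocircuit graph $G^*(\mathcal{M})$ has the cocircuits as vertices, with distinct cocircuits $X,Y$ adjacent iff $|X^0\cap Y^0|\ge r-2$ and $S(X,Y)=\emptyset$. $\operatorname{diam}(G^*(\mathcal{M}))$ is the maximum graph distance between two cocircuits. *)

(* Defs.v *)
From mathcomp Require Import all_boot.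
Set Implicit Arguments. Unset Strict Implicit. Unset Printing Implicit Defensive.

(* Signs: None = 0, Some true = +, Some false = -. Ground set E = 'I_n. *)
Definition sv (n : nat) := {ffun 'I_n -> option bool}.

Section SignVectors.
Variable n : nat.
Implicit Types X Y : sv n.

Definition sv0 : sv n := [ffun _ => None].
Definition svpos X : {set 'I_n} := [set e | X e == Some true].
Definition svneg X : {set 'I_n} := [set e | X e == Some false].
Definition svzero X : {set 'I_n} := [set e | X e == None].
Definition svsupp X : {set 'I_n} := svpos X :|: svneg X.
Definition svopp X : sv n := [ffun e => omap negb (X e)].
Definition svsep X Y : {set 'I_n} :=
  (svpos X :&: svneg Y) :|: (svneg X :&: svpos Y).
Definition svcomp X Y : sv n :=
  [ffun e => if X e is Some b then Some b else Y e].

Definition svle X Y : bool := [forall e, (X e == None) || (X e == Y e)].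
Definition svlt X Y : bool := (X != Y) && svle X Y.

Definition is_oriented_matroid (C : {set sv n}) : Prop :=
  [/\ sv0 \notin C,
      (forall X, X \in C -> svopp X \in C),
      (forall X Y, X \in C -> Y \in C -> svsupp X \subset svsupp Y ->
          X = Y \/ X = svopp Y) &
      (forall X Y e, X \in C -> Y \in C -> X <> svopp Y -> e \in svsep X Y ->
          exists2 Z, Z \in C &
            svpos Z \subset (svpos X :|: svpos Y) :\ e /\
            svneg Z \subset (svneg X :|: svneg Y) :\ e)].

Definition covector (C : {set sv n}) (V : sv n) : Prop :=
  exists s : seq (sv n), all (mem C) s /\ V = foldr svcomp sv0 s.

(* a chain 0 = V0 < V1 < ... < Vk of covectors, represented by [V1;...;Vk] *)
Definition covector_chain (C : {set sv n}) (s : seq (sv n)) : Prop :=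
  path svlt sv0 s /\ (forall V, V \in s -> covector C V).

Definition has_rank (C : {set sv n}) (r : nat) : Prop :=
  (exists s, covector_chain C s /\ size s = r) /\
  (forall s, covector_chain C s -> size s <= r).

Definition uniform (C : {set sv n}) (r : nat) : Prop :=
  forall X, X \in C -> #|svzero X| = r - 1.

Definition cocircuit_adj (C : {set sv n}) (r : nat) : rel (sv n) :=
  fun X Y => [&& X \in C, Y \in C, X != Y,
                r - 2 <= #|svzero X :&: svzero Y| & svsep X Y == set0].

Definition dist_le (C : {set sv n}) (r : nat) X Y (d : nat) : Prop :=
  exists s : seq (sv n),
    [/\ size s <= d, path (cocircuit_adj C r) X s & last X s = Y].

Definition is_cocircuit_diam (C : {set sv n}) (r : nat) (D : nat) : Prop :=
  (forall X Y, X \in C -> Y \in C -> dist_le C r X Y D) /\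
  (forall D', (forall X Y, X \in C -> Y \in C -> dist_le C r X Y D') -> D <= D').

End SignVectors.

(* Main.v *)
Require Import Defs.
From mathcomp Require Import all_boot zify.
From Stdlib Require Import Classical_Prop.
Set Implicit Arguments. Unset Strict Implicit. Unset Printing Implicit Defensive.


Lemma card_lift_pred n (e : 'I_n.+1) (P : pred 'I_n.+1) :
  #|[set j | P j]| = P e + #|[set i : 'I_n | P (lift e i)]|.
Proof.
rewrite (cardD1 e) inE; congr (_ + _).
rewrite -(card_imset _ (@lift_inj _ e)); apply: eq_card => j.
rewrite !inE; case: (unliftP e j) => [i ->|->].
  rewrite (mem_imset _ _ (@lift_inj _ e)) inE.
  by rewrite eq_sym neq_lift.
rewrite eqxx /=; apply/esym/negbTE/imsetP => -[i _ /eqP].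
by rewrite (negbTE (neq_lift _ _)).
Qed.

Definition ext n (e : 'I_n.+1) (Y : sv n) : sv n.+1 :=
  [ffun j => if unlift e j is Some i then Y i else None].
Definition restr n (e : 'I_n.+1) (X : sv n.+1) : sv n := [ffun i => X (lift e i)].
Definition contr n (e : 'I_n.+1) (C : {set sv n.+1}) : {set sv n} :=
  [set Y | ext e Y \in C].

Lemma ext_lift n (e : 'I_n.+1) (Y : sv n) i : ext e Y (lift e i) = Y i.
Proof. by rewrite ffunE liftK. Qed.
Lemma ext_e n (e : 'I_n.+1) (Y : sv n) : ext e Y e = None.
Proof. by rewrite ffunE unlift_none. Qed.
Lemma restr_ext n (e : 'I_n.+1) (Y : sv n) : restr e (ext e Y) = Y.
Proof. by apply/ffunP => i; rewrite ffunE ext_lift. Qed.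
Lemma ext_restr n (e : 'I_n.+1) (X : sv n.+1) : X e = None -> ext e (restr e X) = X.
Proof.
move=> He; apply/ffunP => j; rewrite ffunE; case: (unliftP e j) => [i ->|->] //.
by rewrite ffunE.
Qed.
Lemma ext_inj n (e : 'I_n.+1) : injective (ext e).
Proof. exact: can_inj (@restr_ext n e). Qed.
Lemma in_contr n (e : 'I_n.+1) (C : {set sv n.+1}) (Y : sv n) : (Y \in contr e C) = (ext e Y \in C).
Proof. by rewrite inE. Qed.
Lemma ext_sv0 n (e : 'I_n.+1) : ext e (sv0 n) = sv0 n.+1.
Proof. by apply/ffunP => j; rewrite !ffunE; case: unlift => // i; rewrite ffunE. Qed.
Lemma ext_opp n (e : 'I_n.+1) (Y : sv n) : ext e (svopp Y) = svopp (ext e Y).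
Proof. by apply/ffunP => j; rewrite !ffunE; case: unlift => // i; rewrite ffunE. Qed.
Lemma ext_comp n (e : 'I_n.+1) (Y Z : sv n) : ext e (svcomp Y Z) = svcomp (ext e Y) (ext e Z).
Proof. by apply/ffunP => j; rewrite !ffunE; case: unlift => // i; rewrite ffunE. Qed.

Lemma card_ext n (e : 'I_n.+1) (P : pred 'I_n.+1) :
  #|[set j | P j]| = P e + #|[set i : 'I_n | P (lift e i)]|.
Proof. exact: card_lift_pred. Qed.

Lemma svzeroE n (X : sv n) : svzero X = [set j | X j == None].
Proof. by []. Qed.

Lemma card_zero_ext n (e : 'I_n.+1) (Y : sv n) : #|svzero (ext e Y)| = (#|svzero Y|).+1.
Proof.
rewrite /svzero (card_ext e) ext_e /=; congr (_ .+1); apply: eq_card => i.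
by rewrite !inE ext_lift.
Qed.

Lemma card_zeroI_ext n (e : 'I_n.+1) (Y Z : sv n) :
  #|svzero (ext e Y) :&: svzero (ext e Z)| = (#|svzero Y :&: svzero Z|).+1.
Proof.
have -> : svzero (ext e Y) :&: svzero (ext e Z) =
   [set j | (ext e Y j == None) && (ext e Z j == None)].
  by apply/setP => j; rewrite !inE.
rewrite (card_ext e) !ext_e /=; congr (_ .+1); apply: eq_card => i.
by rewrite !inE !ext_lift.
Qed.

Lemma svsepE n (X Y : sv n) : svsep X Y =
  [set j | ((X j == Some true) && (Y j == Some false)) ||
           ((X j == Some false) && (Y j == Some true))].
Proof. by apply/setP => j; rewrite !inE. Qed.

Lemma sep_ext n (e : 'I_n.+1) (Y Z : sv n) :
  (svsep (ext e Y) (ext e Z) == set0) = (svsep Y Z == set0).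
Proof.
rewrite -!cards_eq0 !svsepE (card_ext e) !ext_e /=; congr (_ == 0).
by apply: eq_card => i; rewrite !inE !ext_lift.
Qed.


Lemma contr_OM n (e : 'I_n.+1) (C : {set sv n.+1}) :
  is_oriented_matroid C -> is_oriented_matroid (contr e C).
Proof.
case=> H0 H1 H2 H3; split.
- by rewrite in_contr ext_sv0.
- by move=> X; rewrite !in_contr ext_opp; apply: H1.
- move=> X Y; rewrite !in_contr => hX hY hs.
  have hs' : svsupp (ext e X) \subset svsupp (ext e Y).
    apply/subsetP => j; rewrite !inE; case: (unliftP e j) => [i ->|->].
      rewrite !ext_lift => hj; have := subsetP hs i; rewrite !inE; exact.
    by rewrite ext_e.
  case: (H2 _ _ hX hY hs') => [/ext_inj -> | ]; first by left.
  by rewrite -ext_opp => /ext_inj ->; right.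
- move=> X Y f; rewrite !in_contr => hX hY hne hf.
  have hne' : ext e X <> svopp (ext e Y).
    by rewrite -ext_opp => /ext_inj.
  have hf' : lift e f \in svsep (ext e X) (ext e Y).
    by move: hf; rewrite !svsepE !inE !ext_lift.
  case: (H3 _ _ _ hX hY hne' hf') => Z hZ [hp hn].
  have hZe : Z e = None.
    case E: (Z e) => [[]|] //.
      have := subsetP hp e; rewrite !inE E !ext_e /= => /(_ isT).
      by rewrite andbF.
    have := subsetP hn e; rewrite !inE E !ext_e /= => /(_ isT).
    by rewrite andbF.
  exists (restr e Z); first by rewrite in_contr ext_restr.
  split; apply/subsetP => i; rewrite !inE ffunE.
  + move=> hi; have := subsetP hp (lift e i); rewrite !inE hi !ext_lift => /(_ isT).
    by rewrite (inj_eq (@lift_inj _ e)).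
  + move=> hi; have := subsetP hn (lift e i); rewrite !inE hi !ext_lift => /(_ isT).
    by rewrite (inj_eq (@lift_inj _ e)).
Qed.

Lemma contr_uniform n (e : 'I_n.+1) (C : {set sv n.+1}) r :
  uniform C r.+1 -> uniform (contr e C) r.
Proof.
move=> hu Y; rewrite in_contr => /hu; rewrite card_zero_ext => h.
rewrite subn1 /= in h; by rewrite -h subn1.
Qed.


Lemma adj_ext n (e : 'I_n.+1) (C : {set sv n.+1}) r (X Y : sv n) :
  cocircuit_adj (contr e C) r X Y -> cocircuit_adj C r.+1 (ext e X) (ext e Y).
Proof.
case/and5P => hX hY hne hc hs; apply/and5P; split.
- by rewrite -in_contr.
- by rewrite -in_contr.
- by rewrite (inj_eq (@ext_inj _ e)).
- rewrite card_zeroI_ext; lia.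
- by rewrite sep_ext.
Qed.

Lemma path_ext_adj n (e : 'I_n.+1) (C : {set sv n.+1}) r (X : sv n) s :
  path (cocircuit_adj (contr e C) r) X s ->
  path (cocircuit_adj C r.+1) (ext e X) (map (ext e) s).
Proof.
elim: s X => //= Y s IH X /andP [h1 h2]; rewrite adj_ext //=; exact: IH.
Qed.

Lemma dist_ext n (e : 'I_n.+1) (C : {set sv n.+1}) r (X Y : sv n) d :
  dist_le (contr e C) r X Y d -> dist_le C r.+1 (ext e X) (ext e Y) d.
Proof.
case=> s [hs hp hl]; exists (map (ext e) s); split.
- by rewrite size_map.
- exact: path_ext_adj.
- by rewrite last_map hl.
Qed.

Lemma foldr_ext n (e : 'I_n.+1) (s : seq (sv n)) :
  ext e (foldr (@svcomp n) (sv0 n) s) = foldr (@svcomp n.+1) (sv0 n.+1) (map (ext e) s).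
Proof. by elim: s => [|X s IH] /=; rewrite ?ext_sv0 // ext_comp IH. Qed.

Lemma covector_ext n (e : 'I_n.+1) (C : {set sv n.+1}) (V : sv n) :
  covector (contr e C) V -> covector C (ext e V).
Proof.
case=> s [hs ->]; exists (map (ext e) s); split; last exact: foldr_ext.
apply/allP => Y /mapP [X hX ->]; move/allP: hs => /(_ X hX).
by rewrite /mem /= in_contr.
Qed.

Lemma svle_ext n (e : 'I_n.+1) (A B : sv n) : svle (ext e A) (ext e B) = svle A B.
Proof.
apply/forallP/forallP => h j.
  by have := h (lift e j); rewrite !ext_lift.
case: (unliftP e j) => [i ->|->]; first by rewrite !ext_lift.
by rewrite ext_e.
Qed.

Lemma svlt_ext n (e : 'I_n.+1) (A B : sv n) : svlt (ext e A) (ext e B) = svlt A B.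
Proof. by rewrite /svlt svle_ext (inj_eq (@ext_inj _ e)). Qed.

Lemma path_svlt_ext n (e : 'I_n.+1) (A : sv n) s :
  path (@svlt n.+1) (ext e A) (map (ext e) s) = path (@svlt n) A s.
Proof. by elim: s A => //= B s IH A; rewrite svlt_ext IH. Qed.

Lemma svle_zero n (V W : sv n) : svle V W -> svzero W \subset svzero V.
Proof.
move/forallP => h; apply/subsetP => j; rewrite !inE => /eqP hw.
by case/orP: (h j) => [//|/eqP ->]; rewrite hw.
Qed.

Lemma svlt_zero n (V W : sv n) : svlt V W -> #|svzero W| < #|svzero V|.
Proof.
case/andP => hne hle; apply: proper_card; apply/properP; split; first exact: svle_zero.
case: (boolP [exists j, (V j == None) && (W j != None)]).
  by case/existsP => j /andP [h1 h2]; exists j; rewrite !inE.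
move/existsPn => hn; case/negP: hne; apply/eqP/ffunP => j.
move/forallP: hle => /(_ j); case/orP => [/eqP hv|/eqP //].
move: (hn j); rewrite hv /=; by case: (W j).
Qed.

Lemma path_zero n (V : sv n) s : path (@svlt n) V s -> size s <= #|svzero V|.
Proof.
elim: s V => //= W s IH V /andP [h1 h2].
exact: leq_ltn_trans (IH _ h2) (svlt_zero h1).
Qed.

Lemma covec_nz n (C : {set sv n}) V : covector C V -> V != sv0 n ->
  exists2 X, X \in C & svzero V \subset svzero X.
Proof.
case=> [[|X s]] [hs ->] /=; first by rewrite eqxx.
move=> _; exists X; first by move: hs => /= /andP [].
apply/subsetP => j; rewrite !inE ffunE; by case: (X j).
Qed.

Lemma chain_ub n (C : {set sv n}) r s : uniform C r -> 0 < r ->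
  covector_chain C s -> size s <= r.
Proof.
move=> hu hr; case: s => [|V s] //= [/andP [hlt hp] hc].
have hV : V != sv0 n by rewrite eq_sym; case/andP: hlt.
have [X hX hsub] := covec_nz (hc V (mem_head _ _)) hV.
have := path_zero hp; have := subset_leq_card hsub; rewrite (hu X hX) => h1 h2.
have h3 : r - 1 < r by rewrite subn1 ltn_predL.
exact: leq_ltn_trans (leq_trans h2 h1) h3.
Qed.


Lemma zero_opp n (Y : sv n) : svzero (svopp Y) = svzero Y.
Proof. by apply/setP => j; rewrite !inE ffunE; case: (Y j). Qed.

Lemma svoppK n (Y : sv n) : svopp (svopp Y) = Y.
Proof. by apply/ffunP => j; rewrite !ffunE; case: (Y j) => // -[]. Qed.

Lemma HE n (C : {set sv n}) (X Y : sv n) b :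
  is_oriented_matroid C -> X \in C -> Y \in C -> svzero X != svzero Y ->
  b \notin svzero X -> b \notin svzero Y ->
  exists2 Z, Z \in C & (svzero X :&: svzero Y) \subset svzero Z /\ b \in svzero Z.
Proof.
case=> _ H1 _ H3 hX hY hne hbX hbY.
have key : forall Y', Y' \in C -> svzero Y' = svzero Y -> X <> svopp Y' ->
    b \in svsep X Y' ->
    exists2 Z, Z \in C & (svzero X :&: svzero Y) \subset svzero Z /\ b \in svzero Z.
  move=> Y' hY' hz hn hb; case: (H3 _ _ _ hX hY' hn hb) => Z hZ [hp hn'].
  exists Z => //; split.
    apply/subsetP => j; rewrite -hz !inE => /andP [/eqP h1 /eqP h2].
    case E: (Z j) => [[]|] //.
      by have := subsetP hp j; rewrite !inE E h1 h2 /= andbF => /(_ isT).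
    by have := subsetP hn' j; rewrite !inE E h1 h2 /= andbF => /(_ isT).
  rewrite inE; case E: (Z b) => [[]|] //.
    by have := subsetP hp b; rewrite !inE E eqxx /= => /(_ isT).
  by have := subsetP hn' b; rewrite !inE E eqxx /= => /(_ isT).
move: hbX hbY; rewrite !inE.
case EX: (X b) => [bx|] // _; case EY: (Y b) => [by_|] // _.
have [hxy|hxy] := eqVneq bx by_; first subst by_.
- apply: (key (svopp Y)); first exact: H1.
  + exact: zero_opp.
  + by rewrite svoppK => hXY; move: hne; rewrite hXY eqxx.
  + by rewrite svsepE inE ffunE EX EY; move: EX EY; case: bx.
- apply: (key Y) => //.
  + by move=> hXY; move: hne; rewrite hXY zero_opp eqxx.
  + by rewrite svsepE inE EX EY; move: hxy EX EY; case: bx; case: by_.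
Qed.


Lemma foldr_none n (u : seq (sv n)) j :
  (foldr (@svcomp n) (sv0 n) u j == None) = all (fun X : sv n => X j == None) u.
Proof.
elim: u => [|X u IH] /=; first by rewrite ffunE.
by rewrite ffunE; case: (X j) => //= ; rewrite IH.
Qed.

Lemma covector_restr n (e : 'I_n.+1) (C : {set sv n.+1}) (V : sv n.+1) :
  covector C V -> V e = None -> covector (contr e C) (restr e V).
Proof.
case=> u [hu hV] he.
have hall : all (fun X : sv n.+1 => X e == None) u by rewrite -foldr_none -hV he.
exists (map (restr e) u); split.
  apply/allP => Y /mapP [X hX ->]; rewrite /mem /= in_contr ext_restr.
    by move/allP: hu => /(_ X hX).
  by move/allP: hall => /(_ X hX) /eqP.
apply: (@ext_inj _ e); rewrite ext_restr // foldr_ext -map_comp hV.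
congr foldr; rewrite -[LHS]map_id; apply/eq_in_map => X hX /=.
by rewrite ext_restr //; move/allP: hall => /(_ X hX) /eqP.
Qed.

Lemma path_last_zero n (x : sv n) s V : path (@svlt n) x s -> V \in s ->
  svzero (last x s) \subset svzero V.
Proof.
elim: s x => //= W s IH x /andP [h1 h2]; rewrite inE => /orP [/eqP ->|hV].
  elim: s W h2 {IH h1} => //= W' s IH W /andP [h1 h2].
  exact: subset_trans (IH _ h2) (svle_zero (proj2 (andP h1))).
exact: IH.
Qed.

Lemma svlt_witness n (V W : sv n) : svlt V W -> exists j, V j = None /\ W j != None.
Proof.
move=> h; have := svlt_zero h => hc.
have : ~~ (svzero V \subset svzero W).
  apply/negP => hs; have := subset_leq_card hs; rewrite leqNgt hc //.
case/subsetPn => j; rewrite !inE => /eqP h1 h2; by exists j.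
Qed.


Definition hypF n (C : {set sv n}) r :=
  forall T : {set 'I_n}, #|T| = r - 1 -> exists2 X, X \in C & svzero X = T.
Definition has_chain n (C : {set sv n}) r :=
  exists s, covector_chain C s /\ size s = r.

Lemma eq_sub_card n (A B : {set 'I_n}) : A \subset B -> #|B| <= #|A| -> A = B.
Proof. by move=> h1 h2; apply/eqP; rewrite eqEcard h1 h2. Qed.

Lemma F1 r : forall n (C : {set sv n}), is_oriented_matroid C -> uniform C r.+1 ->
  has_chain C r.+1 -> hypF C r.+1.
Proof.
elim: r => [|r IH] n C hOM hu [s [[hp hc] hs]].
  case: s hp hc hs => [|V [|]] //= /andP [hlt _] hc _.
  have hV : V != sv0 n by rewrite eq_sym; case/andP: hlt.
  have [X hX _] := covec_nz (hc V (mem_head _ _)) hV.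
  move=> T hT; exists X => //.
  have := hu X hX; rewrite subnn => /eqP; rewrite cards_eq0 => /eqP ->.
  by apply/esym/eqP; rewrite -cards_eq0; apply/eqP.
case/lastP: s hp hc hs => [|s' Vt] //.
rewrite rcons_path size_rcons => /andP [hp' hlt] hc [hs'].
have [e [hLe hVe]] := svlt_witness hlt.
case: n C s' Vt e hOM hu hp' hlt hc hLe hVe hs' => [|n] C s' Vt e; first by case: e.
move=> hOM hu hp' hlt hc hLe hVe hs'.
have hall : forall V, V \in s' -> V e = None.
  move=> V hV; have := subsetP (path_last_zero hp' hV) e; rewrite !inE hLe eqxx.
  by move=> /(_ isT) /eqP.
set t := map (restr e) s'.
have hmap : map (ext e) t = s'.
  rewrite -map_comp -[RHS]map_id; apply/eq_in_map => V hV /=.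
  by rewrite ext_restr // hall.
have hch : has_chain (contr e C) r.+1.
  exists t; split; last by rewrite size_map.
  split; first by rewrite -(path_svlt_ext e) ext_sv0 hmap.
  move=> W /mapP [V hV ->]; apply: covector_restr; last exact: hall.
  by apply: hc; rewrite mem_rcons inE hV orbT.
have hF := IH _ _ (@contr_OM _ e _ hOM) (@contr_uniform _ e _ _ hu) hch.
have hCe : forall T : {set 'I_n.+1}, #|T| = r.+1 -> e \in T -> exists2 X, X \in C & svzero X = T.
  move=> T hT heT.
  have hT' : #|[set i : 'I_n | lift e i \in T]| = r.+1 - 1.
    have := card_lift_pred e (mem T); rewrite cardsE /= heT add1n hT => -[<-].
    by rewrite subn1.
  have [Y hY hYz] := hF _ hT'.
  exists (ext e Y); first by rewrite -in_contr.
  apply/setP => j; rewrite !inE; case: (unliftP e j) => [i ->|->].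
    by rewrite ext_lift; move/setP: hYz => /(_ i); rewrite !inE.
  by rewrite ext_e heT.
have [Y0 hY0 hY0e] : exists2 Y0, Y0 \in C & Y0 e != None.
  have := hc Vt; rewrite mem_rcons mem_head => /(_ isT) [u [hu' hVt]].
  have : ~~ all (fun X : sv n.+1 => X e == None) u by rewrite -foldr_none -hVt.
  case/allPn => X hX hXe; exists X => //; by move/allP: hu' => /(_ X hX).
have hE : forall m (X : sv n.+1) (T : {set 'I_n.+1}), X \in C -> X e != None ->
    #|T| = r.+1 -> e \notin T -> #|T :\: svzero X| = m ->
    exists2 Z, Z \in C & svzero Z = T.
  elim=> [|m IHm] X T hX hXe hT heT hm.
    exists X => //.
    have hs : T \subset svzero X by rewrite -setD_eq0 -cards_eq0 hm.
    by apply/esym/eq_sub_card => //; rewrite (hu X hX) hT subn1.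
  have [b hb] : exists b, b \in T :\: svzero X.
    by apply/set0Pn; rewrite -cards_eq0 hm.
  move: hb; rewrite inE => /andP [hbX hbT].
  have [a ha] : exists a, a \in svzero X :\: T.
    apply/set0Pn; rewrite setD_eq0; apply/negP => hs.
    have hc' : #|T| <= #|svzero X| by rewrite (hu X hX) hT subn1.
    have hXT := eq_sub_card hs hc'.
    by move: hbX; rewrite hXT hbT.
  move: ha; rewrite inE => /andP [haT haX].
  set U := svzero X :\ a.
  have heX : e \notin svzero X by rewrite inE.
  have hcU : #|U| = r.
    have := cardsD1 a (svzero X); rewrite haX (hu X hX) subn1 /= add1n.
    by move=> [->].
  have heU : e \notin U by rewrite inE negb_and heX orbT.
  have hbU : b \notin U by rewrite inE negb_and hbX orbT.
  have hcU' : #|e |: U| = r.+1 by rewrite cardsU1 heU hcU.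
  have [Y hY hYz] := hCe (e |: U) hcU' (setU11 e U).
  have hne : svzero X != svzero Y.
    by rewrite hYz; apply/eqP => h; move: heX; rewrite h setU11.
  have hbY : b \notin svzero Y.
    rewrite hYz in_setU1 negb_or hbU andbT; apply/eqP => hbe.
    by move: heT; rewrite -hbe hbT.
  have [Z hZ [hsub hbZ]] := HE hOM hX hY hne hbX hbY.
  have hZz : svzero Z = b |: U.
    apply/esym/eq_sub_card.
      apply/subsetP => j; rewrite in_setU1 => /orP [/eqP -> //|hj].
      apply: (subsetP hsub); rewrite inE hYz in_setU1 hj orbT andbT.
      by move: hj; rewrite inE => /andP [].
    by rewrite (hu Z hZ) cardsU1 hbU hcU subn1.
  apply: (IHm Z T hZ _ hT heT).
    have : e \notin svzero Z.
      rewrite hZz in_setU1 negb_or heU andbT; apply/eqP => heb.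
      by move: heT; rewrite heb hbT.
    by rewrite inE.
  have -> : T :\: svzero Z = (T :\: svzero X) :\ b.
    apply/setP => j; rewrite hZz !inE.
    have [->|hja] := eqVneq j a; first by rewrite (negbTE haT) !andbF.
    by rewrite /= negb_or andbA.
  have := cardsD1 b (T :\: svzero X); rewrite inE hbX hbT hm add1n.
  by move=> [->].
move=> T; rewrite subn1 /= => hT.
case: (boolP (e \in T)) => heT; first exact: hCe.
exact: (hE _ Y0 T hY0 hY0e hT heT erefl).
Qed.


Definition Good n (C : {set sv n}) r :=
  [/\ is_oriented_matroid C, uniform C r, hypF C r & r <= n].

Lemma contr_good n (e : 'I_n.+1) (C : {set sv n.+1}) r :
  0 < r -> Good C r.+1 -> Good (contr e C) r.
Proof.
move=> hr [hOM hu hF hrn]; split.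
- exact: contr_OM.
- exact: contr_uniform.
- move=> T hT; set T1 := e |: [set lift e i | i in T].
  have hT1 : #|T1| = r.+1 - 1.
    rewrite cardsU1 card_imset; last exact: lift_inj.
    have -> : e \notin [set lift e i | i in T].
      by apply/imsetP => -[i _ /eqP]; rewrite (negbTE (neq_lift _ _)).
    by rewrite hT subn1 /= add1n subn1 prednK.
  have [X hX hXz] := hF _ hT1.
  have hXe : X e = None.
    by apply/eqP; move/setP: hXz => /(_ e); rewrite !inE eqxx.
  exists (restr e X); first by rewrite in_contr ext_restr.
  apply/setP => i; rewrite !inE ffunE; move/setP: hXz => /(_ (lift e i)).
  by rewrite !inE (mem_imset _ _ (@lift_inj _ e)) (eq_sym (lift e i)) (negbTE (neq_lift _ _)).
- by [].
Qed.


Lemma filler (T : finType) (A B : {set T}) m :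
  A \subset B -> #|A| <= m -> m <= #|B| ->
  exists Y : {set T}, [/\ A \subset Y, Y \subset B & #|Y| = m].
Proof.
move=> hAB hA hB; move: {2}(m - #|A|) (erefl (m - #|A|)) => k.
elim: k A hAB hA => [|k IH] A hAB hA hk.
  by exists A; split => //; lia.
have : A \proper B.
  rewrite properEcard hAB /=; lia.
case/properP => _ [x hxB hxA].
have [|||Y [h1 h2 h3]] := IH (x |: A).
- by rewrite subUset sub1set hxB hAB.
- rewrite cardsU1 hxA; lia.
- rewrite cardsU1 hxA; lia.
exists Y; split => //; exact: subset_trans (subsetUr _ _) h1.
Qed.

Lemma comp_sv0r n (X : sv n) : svcomp X (sv0 n) = X.
Proof. by apply/ffunP => j; rewrite !ffunE; case: (X j). Qed.

Lemma comp_assoc n (X Y Z : sv n) : svcomp X (svcomp Y Z) = svcomp (svcomp X Y) Z.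
Proof. by apply/ffunP => j; rewrite !ffunE; case: (X j). Qed.

Lemma foldr_rcons_comp n (u : seq (sv n)) X :
  foldr (@svcomp n) (sv0 n) (rcons u X) = svcomp (foldr (@svcomp n) (sv0 n) u) X.
Proof.
elim: u => [|Y u IH] /=; first by rewrite comp_sv0r; apply/ffunP => j; rewrite !ffunE.
by rewrite IH comp_assoc.
Qed.

Lemma chain_build n (C : {set sv n}) r : 0 < r -> Good C r ->
  forall d (Z : {set 'I_n}), #|Z| + d = r - 1 ->
  exists s, [/\ path (@svlt n) (sv0 n) s, (forall V, V \in s -> covector C V),
     size s = d.+1 & svzero (last (sv0 n) s) = Z].
Proof.
move=> hr [[H0 _ _ _] hu hF hrn]; elim=> [|d IH] Z hZ.
  rewrite addn0 in hZ; have [X hX hXz] := hF _ hZ.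
  exists [:: X]; split => //=.
  - rewrite andbT /svlt; apply/andP; split.
      by apply/eqP => h; move: H0; rewrite h hX.
    by apply/forallP => j; rewrite ffunE.
  - move=> V; rewrite inE => /eqP ->; exists [:: X]; split; first by rewrite /= andbT.
    by rewrite /= comp_sv0r.
have [a haZ] : exists a, a \notin Z.
  have : Z \proper [set: 'I_n] by rewrite properEcard subsetT cardsT card_ord; lia.
  by case/properP => _ [a _ ha]; exists a.
have hZ' : #|a |: Z| + d = r - 1 by rewrite cardsU1 haZ add1n addSnnS.
have [s [hp hc hs hz]] := IH (a |: Z) hZ'.
have f1 : Z \subset ~: [set a].
  by apply/subsetP => j hj; rewrite !inE; apply/eqP => hja; move: haZ; rewrite -hja hj.
have f2 : #|Z| <= r - 1 by rewrite -hZ leq_addr.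
have f3 : r - 1 <= #|~: [set a]| by rewrite cardsC1 card_ord; lia.
have [Y [h1 h2 h3]] := filler f1 f2 f3.
have [X hX hXz] := hF _ h3.
have haX : X a != None.
  apply/negP => ha; have : a \in svzero X by rewrite inE.
  by rewrite hXz => /(subsetP h2); rewrite !inE eqxx.
set V := last (sv0 n) s.
exists (rcons s (svcomp V X)); split.
- rewrite rcons_path hp /=; apply/andP; split.
    apply/eqP => /ffunP /(_ a); rewrite ffunE.
    have : V a = None by apply/eqP; move/setP: hz => /(_ a); rewrite !inE eqxx.
    by move=> ->; move: haX; case: (X a).
  by apply/forallP => j; rewrite ffunE; case: (V j) => //= b; rewrite eqxx orbT.
- move=> W; rewrite mem_rcons inE => /orP [/eqP ->|]; last exact: hc.
  move: hs hc; rewrite /V; case/lastP: s {hp hz V} => [|s0 v] //= _ hc.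
  rewrite last_rcons; have [u [hu' ->]] : covector C v by apply: hc; rewrite mem_rcons mem_head.
  exists (rcons u X); split; last by rewrite foldr_rcons_comp.
  by rewrite all_rcons hu' andbT.
- by rewrite size_rcons hs.
- rewrite last_rcons; apply/setP => j; rewrite !inE ffunE.
  have hV : (V j == None) = (j == a) || (j \in Z).
    by move/setP: hz => /(_ j); rewrite !inE.
  have hXj : (X j == None) = (j \in Y) by move/setP: hXz => /(_ j); rewrite !inE.
  case E: (V j) hV => [b|] /=.
    by move=> /esym /norP [_ /negbTE ->].
  move=> /esym hja; rewrite hXj; have [hj|hj] := eqVneq j a.
    rewrite hj (negbTE haZ); apply/negbTE; apply/negP => /(subsetP h2).
    by rewrite !inE eqxx.
  by move: hja; rewrite (negbTE hj) /= => hjZ; rewrite hjZ (subsetP h1).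
Qed.


Lemma good_rank n (C : {set sv n}) r : 0 < r -> Good C r -> has_rank C r.
Proof.
move=> hr hG; split.
  have hz : #|@set0 'I_n| + (r - 1) = r - 1 by rewrite cards0.
  have [s [hp hc hs _]] := chain_build hr hG hz.
  by exists s; split => //; rewrite hs; lia.
by move=> s hs; apply: chain_ub hs; [case: hG|].
Qed.

Definition connected n (C : {set sv n}) r :=
  forall X Y, X \in C -> Y \in C -> exists d, dist_le C r X Y d.

Lemma dist_refl n (C : {set sv n}) r X : dist_le C r X X 0.
Proof. by exists [::]. Qed.

Lemma dist_cat n (C : {set sv n}) r X W Y d1 d2 :
  dist_le C r X W d1 -> dist_le C r W Y d2 -> dist_le C r X Y (d1 + d2).
Proof.
case=> s1 [h1 p1 l1] [s2 [h2 p2 l2]]; exists (s1 ++ s2); split.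
- by rewrite size_cat leq_add.
- by rewrite cat_path p1 l1 p2.
- by rewrite last_cat l1.
Qed.

Lemma conn_cat n (C : {set sv n}) r X W Y :
  (exists d, dist_le C r X W d) -> (exists d, dist_le C r W Y d) ->
  exists d, dist_le C r X Y d.
Proof. by case=> d1 h1 [d2 h2]; exists (d1 + d2); exact: dist_cat h1 h2. Qed.

Lemma elim_sep n (X Y Z : sv n) e :
  svpos Z \subset (svpos X :|: svpos Y) :\ e ->
  svneg Z \subset (svneg X :|: svneg Y) :\ e -> e \in svsep X Y ->
  svsep X Z \proper svsep X Y /\ svsep Z Y \proper svsep X Y.
Proof.
move=> hp hn he.
have hZe : Z e = None.
  case E: (Z e) => [[]|] //.
    by have := subsetP hp e; rewrite !inE E !eqxx /= => /(_ isT).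
  by have := subsetP hn e; rewrite !inE E !eqxx /= => /(_ isT).
have hP j : Z j = Some true -> X j = Some true \/ Y j = Some true.
  move=> hj; have := subsetP hp j; rewrite !inE hj eqxx => /(_ isT) /andP [_].
  by case/orP => /eqP; [left|right].
have hN j : Z j = Some false -> X j = Some false \/ Y j = Some false.
  move=> hj; have := subsetP hn j; rewrite !inE hj eqxx => /(_ isT) /andP [_].
  by case/orP => /eqP; [left|right].
split; apply/properP; (split; last by exists e => //; rewrite !svsepE !inE hZe /= ?andbF);
  apply/subsetP => j; rewrite !svsepE !inE.
- case/orP => /andP [/eqP h1 /eqP h2].
    case: (hN j h2) => h3; first by rewrite h3 in h1.
    by rewrite h1 h3 !eqxx.
  case: (hP j h2) => h3; first by rewrite h3 in h1.
  by rewrite h1 h3 !eqxx orbT.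
- case/orP => /andP [/eqP h1 /eqP h2].
    case: (hP j h1) => h3; last by rewrite h3 in h2.
    by rewrite h2 h3 !eqxx.
  case: (hN j h1) => h3; last by rewrite h3 in h2.
  by rewrite h2 h3 !eqxx orbT.
Qed.


Lemma sep_subl n (A B : sv n) : svsep A B \subset [set j | A j != None].
Proof. by apply/subsetP => j; rewrite svsepE !inE => /orP [] /andP [/eqP -> _]. Qed.
Lemma sep_subr n (A B : sv n) : svsep A B \subset [set j | B j != None].
Proof. by apply/subsetP => j; rewrite svsepE !inE => /orP [] /andP [_ /eqP ->]. Qed.
Lemma sep_opp n (Y : sv n) : svsep (svopp Y) Y = [set j | Y j != None].
Proof. by apply/setP => j; rewrite svsepE !inE ffunE; case: (Y j) => // -[]. Qed.

Lemma conn2 n (C : {set sv n}) : Good C 2 -> connected C 2.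
Proof.
case=> [[H0 H1 H2 H3] hu hF hn] X0 Y0 hX0 hY0.
suff: forall m X Y, X \in C -> Y \in C -> #|svsep X Y| < m ->
    exists d, dist_le C 2 X Y d by apply.
elim=> [//|m IH] X Y hX hY hm.
have [->|hXY] := eqVneq X Y; first by exists 0; exact: dist_refl.
case: (boolP (svsep X Y == set0)) => hs.
  exists 1, [:: Y]; split => //=; rewrite andbT; apply/and5P; split => //.
have rec : forall W, W \in C -> svsep X W \proper svsep X Y ->
    svsep W Y \proper svsep X Y -> exists d, dist_le C 2 X Y d.
  move=> W hW p1 p2; apply: (@conn_cat _ _ _ X W Y).
    by apply: IH => //; exact: leq_trans (proper_card p1) hm.
  by apply: IH => //; exact: leq_trans (proper_card p2) hm.
have [hopp|hopp] := eqVneq X (svopp Y).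
  have [a ha] : exists a, svzero X = [set a].
    by apply/cards1P; rewrite (hu X hX).
  have [b hbX] : exists b, b \notin svzero X.
    have : svzero X \proper [set: 'I_n].
      by rewrite properEcard subsetT cardsT card_ord (hu X hX); lia.
    by case/properP => _ [b _ hb]; exists b.
  have [W hW hWz] := hF [set b] (cards1 b).
  have hWb : W b = None by apply/eqP; move/setP: hWz => /(_ b); rewrite !inE eqxx.
  have hSY : svsep X Y = [set j | Y j != None] by rewrite hopp sep_opp.
  have hYb : Y b != None.
    by move: hbX; rewrite hopp zero_opp inE.
  apply: (rec W hW); apply/properP; (split; last first);
    try (by exists b; [rewrite hSY inE | rewrite svsepE inE hWb /= ?andbF]).
  - by rewrite hSY; apply: subset_trans (sep_subl _ _) _; apply/subsetP => j;
      rewrite hopp !inE ffunE; case: (Y j).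
  - by rewrite hSY; apply: sep_subr.
case/set0Pn: hs => e he.
have [Z hZ [hp hn']] := H3 _ _ _ hX hY (elimN eqP hopp) he.
have [p1 p2] := elim_sep hp hn' he.
exact: rec hZ p1 p2.
Qed.


Lemma conn r : forall n (C : {set sv n}), Good C r.+2 -> connected C r.+2.
Proof.
elim: r => [|r IH] n C hG; first exact: conn2.
case: n C hG => [|n] C hG X Y hX hY; first by case: hG.
have key : forall A B a, A \in C -> B \in C -> A a = None -> B a = None ->
    exists d, dist_le C r.+3 A B d.
  move=> A B a hA hB hAa hBa.
  have hA' : restr a A \in contr a C by rewrite in_contr ext_restr.
  have hB' : restr a B \in contr a C by rewrite in_contr ext_restr.
  have [d hd] := IH _ _ (@contr_good _ a _ _ (ltn0Sn _) hG) _ _ hA' hB'.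
  by exists d; have := dist_ext hd; rewrite !ext_restr.
case: hG => hOM hu hF hrn.
have [a ha] : exists a, a \in svzero X by apply/set0Pn; rewrite -card_gt0 (hu X hX).
have [b hb] : exists b, b \in svzero Y by apply/set0Pn; rewrite -card_gt0 (hu Y hY).
have f1 : [set a; b] \subset [set: 'I_n.+1] by apply: subsetT.
have f2 : #|[set a; b]| <= r.+2 by rewrite cards2; case: (a != b).
have f3 : r.+2 <= #|[set: 'I_n.+1]| by rewrite cardsT card_ord; lia.
have [T [hT1 _ hT3]] := filler f1 f2 f3.
have hT : #|T| = r.+3 - 1 by rewrite hT3 subn1.
have [W hW hWz] := hF T hT.
have hWa : W a = None.
  by apply/eqP; move/setP: hWz => /(_ a); rewrite inE => ->; rewrite (subsetP hT1) // !inE eqxx.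
have hWb : W b = None.
  by apply/eqP; move/setP: hWz => /(_ b); rewrite inE => ->; rewrite (subsetP hT1) // !inE eqxx orbT.
apply: (@conn_cat _ _ _ X W Y).
  by apply: (key _ _ a) => //; apply/eqP; move: ha; rewrite inE.
by apply: (key _ _ b) => //; apply/eqP; move: hb; rewrite inE.
Qed.


Lemma least_nat (P : nat -> Prop) : (exists n, P n) ->
  exists n, P n /\ forall m, P m -> n <= m.
Proof.
case=> n hn; suff: forall k n, n <= k -> P n -> exists n, P n /\ forall m, P m -> n <= m.
  by move=> h; exact: (h n n (leqnn n) hn).
clear n hn; elim=> [|k IH] n hk hn'.
  by exists n; split => // m _; move: hk; rewrite leqn0 => /eqP ->.
case: (classic (exists m, m < n /\ P m)) => [[m [hm hPm]]|hno].
  by apply: (IH m) => //; rewrite -ltnS; exact: leq_trans hm hk.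
exists n; split => // m hPm; rewrite leqNgt; apply/negP => hmn; apply: hno.
by exists m.
Qed.

Lemma fin_bound (T : finType) (P : T -> nat -> Prop) :
  (forall x d d', d <= d' -> P x d -> P x d') -> (forall x, exists d, P x d) ->
  exists D, forall x, P x D.
Proof.
move=> hmono hex.
suff [D hD] : exists D, forall x, x \in enum T -> P x D.
  by exists D => x; apply: hD; rewrite mem_enum.
elim: (enum T) => [|x l [D hD]]; first by exists 0.
have [d hd] := hex x; exists (d + D) => y; rewrite inE => /orP [/eqP ->|hy].
  by apply: hmono hd; rewrite leq_addr.
by apply: hmono (hD y hy); rewrite leq_addl.
Qed.

Lemma fin_max (I : finType) (i0 : I) (Q : I -> nat -> Prop) :
  (forall i, exists d, Q i d) ->
  exists i d, Q i d /\ forall j, exists d', Q j d' /\ d' <= d.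
Proof.
move=> hex.
suff [i [d [hQ hD]]] : exists i d, Q i d /\ forall j, j \in enum I -> exists d', Q j d' /\ d' <= d.
  by exists i, d; split => // j; apply: hD; rewrite mem_enum.
elim: (enum I) => [|x l [i [d [hQ hD]]]].
  by have [d hd] := hex i0; exists i0, d; split.
have [dx hx] := hex x.
case: (leqP dx d) => hle.
  exists i, d; split => // j; rewrite inE => /orP [/eqP ->|hj]; last exact: hD.
  by exists dx.
exists x, dx; split => // j; rewrite inE => /orP [/eqP ->|hj]; first by exists dx.
have [d' [h1 h2]] := hD j hj; exists d'; split => //; exact: leq_trans h2 (ltnW hle).
Qed.

Lemma dist_mono n (C : {set sv n}) r X Y d d' : d <= d' -> dist_le C r X Y d -> dist_le C r X Y d'.
Proof. by move=> hd [s [h1 h2 h3]]; exists s; split => //; exact: leq_trans h1 hd. Qed.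

Lemma diam_exists n (C : {set sv n}) r : connected C r -> exists D, is_cocircuit_diam C r D.
Proof.
move=> hc.
have [D0 hD0] := @fin_bound (sv n * sv n)%type
   (fun p d => p.1 \in C -> p.2 \in C -> dist_le C r p.1 p.2 d)
   (fun p d d' hd h hX hY => dist_mono hd (h hX hY))
   (fun p => match boolP (p.1 \in C), boolP (p.2 \in C) with
     | AltTrue h1, AltTrue h2 => let: ex_intro d hd := hc _ _ h1 h2 in ex_intro _ d (fun _ _ => hd)
     | AltFalse h1, _ => ex_intro _ 0 (fun h => False_ind _ (negP h1 h))
     | _, AltFalse h2 => ex_intro _ 0 (fun _ h => False_ind _ (negP h2 h))
     end).
have [D [hD hmin]] := @least_nat (fun D => forall X Y, X \in C -> Y \in C -> dist_le C r X Y D)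
  (ex_intro _ D0 (fun X Y => hD0 (X, Y))).
by exists D; split.
Qed.


Definition concl k n (C : {set sv n}) r :=
  exists r' : nat, [/\ 2 <= r', r' <= k + 2 &
    exists C' : {set sv (r' + k)}, exists D' : nat,
      [/\ is_oriented_matroid C', has_rank C' r', uniform C' r',
          is_cocircuit_diam C' r' D' &
          forall X Y, X \in C -> Y \in C -> dist_le C r X Y D']].

Lemma self_case r k (C : {set sv (r.+2 + k)}) : Good C r.+2 -> r <= k -> concl k C r.+2.
Proof.
move=> hG hrk; exists r.+2; split => //; first lia.
have [D hD] := diam_exists (conn hG).
exists C, D; split => //; try by case: hG.
- exact: good_rank.
- by case: hD.
Qed.

Lemma Main r : forall k (C : {set sv (r.+2 + k)}), Good C r.+2 -> concl k C r.+2.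
Proof.
elim: r => [|r IH] k C hG; first exact: self_case.
case: (leqP r.+1 k) => hrk; first exact: self_case.
pose C1 : {set sv (r.+2 + k).+1} := C.
have hG1 : Good C1 r.+3 by [].
pose Q (e : 'I_(r.+2 + k).+1) D := exists r' : nat, [/\ 2 <= r', r' <= k + 2 &
    exists C' : {set sv (r' + k)},
      [/\ is_oriented_matroid C', has_rank C' r', uniform C' r',
          is_cocircuit_diam C' r' D &
          forall X Y, X \in contr e C1 -> Y \in contr e C1 ->
            dist_le (contr e C1) r.+2 X Y D]].
have hex : forall e, exists D, Q e D.
  move=> e; have [r' [h1 h2 [C' [D' [a b c d f]]]]] := IH k (contr e C1) (contr_good e (ltn0Sn _) hG1).
  by exists D', r'; split => //; exists C'; split.
have [e0 [D [[r' [h1 h2 [C' [a b c d _]]]] hmax]]] := fin_max ord0 hex.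
exists r'; split => //; exists C', D; split => // X Y hX hY.
case: hG1 => _ hu _ hrn.
have [e he] : exists e, e \in svzero X :&: svzero Y.
  apply/set0Pn; rewrite -card_gt0.
  have := cardsUI (svzero X) (svzero Y); rewrite (hu X hX) (hu Y hY).
  have := max_card (svzero X :|: svzero Y); rewrite card_ord.
  lia.
move: he; rewrite !inE => /andP [/eqP hXe /eqP hYe].
have [d' [[r'' [_ _ [C'' [_ _ _ _ hdist]]]] hd']] := hmax e.
have hX' : restr e X \in contr e C1 by rewrite in_contr ext_restr.
have hY' : restr e Y \in contr e C1 by rewrite in_contr ext_restr.
have := dist_ext (hdist _ _ hX' hY'); rewrite !ext_restr // => h.
exact: dist_mono hd' h.
Qed.

Unset Implicit Arguments.

Theorem theorem4p4 (k r : nat) (C : {set sv (r + k)}) (D : nat) :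
  2 <= r ->
  is_oriented_matroid C -> has_rank C r -> uniform C r ->
  is_cocircuit_diam C r D ->
  exists r' : nat, [/\ 2 <= r', r' <= k + 2 &
    exists C' : {set sv (r' + k)}, exists D' : nat,
      [/\ is_oriented_matroid C', has_rank C' r', uniform C' r',
          is_cocircuit_diam C' r' D' & D <= D']].
Proof.
case: r C => [|[|r]] C // _ hOM [hch _] hu [_ hmin].
have hF : hypF C r.+2 := F1 hOM hu hch.
have hG : Good C r.+2 by split => //; rewrite leq_addr.
have [r' [h1 h2 [C' [D' [a b c d f]]]]] := Main hG.
exists r'; split => //; exists C', D'; split => //.
exact: hmin.
Qed.
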